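(* Let $B$ be a singleton board with $n$ columns, padded with columns of height zero on the left so that $\xi_m(B)=\langle z_1,\ldots,z_n\rangle$ has only non-negative entries. For each integer $k$ let $v_k$ be the number of entries of $\xi_m(B)$ equal to $k$, and let $M$ be the greatest integer with $v_M\ne0$. Let $S$ be the set of non-negative multiples of $m$ strictly less than $M$. Let $i$ be the least non-negative integer such that either $v_i>1$, or $v_i=1$ and $i$ is not a multiple of $m$. If $v_s\ge2$ for all $s\in S$ with $s>i$, then $B$ is connected by a sequence of edges in $G_m(B)$ to a board $B'$ with $m$-level root vector $\xi_m(B')=\langle 0,m,2m,\ldots,\lfloor M-1\rfloor_m,M,\ldots,z_n\rangle$; that is, the first $\frac{\lfloor M-1\rfloor_m}{m}+1$ entries of $\xi_m(B')$ are the non-negative multiples of $m$ from $0$ to $\lfloor M-1\rfloor_m$ in increasing order, and the next entry is the first occurrence of the value $M$.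
   Context: Fix an integer $m>0$. A Ferrers board is given by a weakly increasing sequence of non-negative integers $B=(b_1,\ldots,b_n)$ of column heights (cells in column $i$, rows $1,\ldots,b_i$, of the first quadrant); prepending height-$0$ columns on the left does not change the board, and boards are compared with the same number of columns by such padding. The rows are partitioned into levels: level $t$ consists of rows $(t-1)m+1,\ldots,tm$. An $m$-level rook placement of $k$ rooks is a set of $k$ cells of $B$, no two in the same level or the same column; $r_{k,m}(B)$ is their number, and two boards are $m$-level rook equivalent if they have equal $r_{k,m}$ for all $k\ge0$. For an integer $o$, $\lfloor o\rfloor_m$ is the largest multiple of $m$ that is $\le o$. $B$ is singleton if for each $i<n$, $b_i-\lfloor b_i\rfloor_m\ne0$ implies $\lfloor b_i\rfloor_m<\lfloor b_{i+1}\rfloor_m$. The $m$-level root vector of $B$ is $\xi_m(B)=\langle 0-b_1,m-b_2,\ldots,m(n-1)-b_n\rangle$. The $m$-level rook equivalence graph $G_m(B)$ of a singleton board $B$ has as vertices all singleton boards $m$-level rook equivalent to $B$, and $\{B_1,B_2\}$ is an edge iff, written with the same number of columns, $B_1$ and $B_2$ differ in exactly two columns $i,j$, where $B_1$ has $k$ more cells than $B_2$ in column $i$ and $k$ fewer in column $j$, for some $k>0$. *)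

(* Defs.v *)
From mathcomp Require Import all_boot all_order all_algebra.
From Stdlib Require Import Relations.
Set Implicit Arguments. Unset Strict Implicit. Unset Printing Implicit Defensive.
Import Order.TTheory GRing.Theory Num.Theory.
Local Open Scope ring_scope.

(* A board is a weakly increasing sequence of column heights (b_1,...,b_n),
   stored as a seq nat; column j (0-indexed) has cells in rows 1..nth 0 B j. *)
Definition is_board (B : seq nat) : Prop := sorted leq B.

Definition floorm (m : nat) (o : int) : int := o - (o %% m%:Z)%Z.

Definition singleton (m : nat) (B : seq nat) : Prop :=
  forall i : nat, (i.+1 < size B)%N ->
    (nth 0%N B i)%:Z - floorm m (nth 0%N B i)%:Z != 0 ->
    floorm m (nth 0%N B i)%:Z < floorm m (nth 0%N B i.+1)%:Z.

(* cells: (column c, row r+1) encoded as (c, r) with 0-indexed r;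
   sumn B bounds every column height. *)
Definition cell_in (B : seq nat) (c : 'I_(size B) * 'I_(sumn B)) : bool :=
  (c.2 < nth 0%N B c.1)%N.

(* row r+1 (0-indexed r) lies in level r %/ m + 1 *)
Definition rook_placement (m : nat) (B : seq nat)
    (S : {set 'I_(size B) * 'I_(sumn B)}) : bool :=
  [forall c in S, cell_in c] &&
  [forall c in S, forall d in S,
     (c != d) ==> ((c.1 != d.1) && (c.2 %/ m != d.2 %/ m)%N)].

Definition rook_num (m : nat) (B : seq nat) (k : nat) : nat :=
  #|[set S : {set 'I_(size B) * 'I_(sumn B)} |
      rook_placement m S && (#|S| == k)]|.

Definition rook_equiv (m : nat) (B1 B2 : seq nat) : Prop :=
  forall k : nat, rook_num m B1 k = rook_num m B2 k.

Definition root_vec (m : nat) (B : seq nat) : seq int :=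
  [seq (m * j)%N%:Z - (nth 0%N B j)%:Z | j <- iota 0 (size B)].

Definition root_count (m : nat) (B : seq nat) (k : int) : nat :=
  count_mem k (root_vec m B).

Definition pad (N : nat) (C : seq nat) : seq nat := nseq (N - size C) 0%N ++ C.

Definition G_edge (C1 C2 : seq nat) : Prop :=
  let N := maxn (size C1) (size C2) in
  exists (i j k : nat),
    [/\ (i < N)%N, (j < N)%N, i != j & (0 < k)%N] /\
    nth 0%N (pad N C1) i = (nth 0%N (pad N C2) i + k)%N /\
    (nth 0%N (pad N C1) j + k)%N = nth 0%N (pad N C2) j /\
    (forall l : nat, (l < N)%N -> l != i -> l != j ->
          nth 0%N (pad N C1) l = nth 0%N (pad N C2) l).

Definition G_vertex (m : nat) (B C : seq nat) : Prop :=
  [/\ is_board C, singleton m C & rook_equiv m B C].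

Definition G_step (m : nat) (B : seq nat) (C1 C2 : seq nat) : Prop :=
  [/\ G_vertex m B C1, G_vertex m B C2 & G_edge C1 C2].

Definition G_connected (m : nat) (B C1 C2 : seq nat) : Prop :=
  clos_refl_trans (seq nat) (G_step m B) C1 C2.

Definition i_cond (m : nat) (B : seq nat) (j : int) : bool :=
  (1 < root_count m B j)%N ||
  ((root_count m B j == 1%N) && ~~ (m%:Z %| j)%Z).

Definition least_i (m : nat) (B : seq nat) (i : int) : Prop :=
  [/\ 0 <= i, i_cond m B i &
      forall j : int, 0 <= j -> j < i -> ~~ i_cond m B j].

(* Main.v *)
Require Import Defs.
From mathcomp Require Import all_boot all_order all_algebra zify ring.
From Stdlib Require Import Relations Classical FunctionalExtensionality.
Import Order.TTheory GRing.Theory Num.Theory.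

Module Helpers.
Set Implicit Arguments. Unset Strict Implicit. Unset Printing Implicit Defensive.

Definition plc (m a b : nat) (C : seq nat) (S : {set 'I_a * 'I_b}) : bool :=
  [forall c in S, (c.2 < nth 0 C c.1)%N] &&
  [forall c in S, forall d in S,
     (c != d) ==> ((c.1 != d.1) && (c.2 %/ m != d.2 %/ m)%N)].

Definition cnt (m a b : nat) (C : seq nat) (k : nat) : nat :=
  #|[set S : {set 'I_a * 'I_b} | plc m C S && (#|S| == k)]|.

Lemma rook_num_cnt m B k : rook_num m B k = cnt m (size B) (sumn B) B k.
Proof. by []. Qed.

Lemma plcP m a b C (S : {set 'I_a * 'I_b}) :
  reflect ((forall c, c \in S -> c.2 < nth 0 C c.1) /\
           (forall c d, c \in S -> d \in S -> c != d -> (c.1 != d.1) && (c.2 %/ m != d.2 %/ m)))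
          (plc m C S).
Proof.
apply: (iffP andP) => [[/forall_inP H1 /forall_inP H2]|[H1 H2]]; split.
- by move=> c /H1.
- by move=> c d /H2 /forall_inP Hd /Hd /implyP.
- by apply/forall_inP.
- by apply/forall_inP => c cS; apply/forall_inP => d dS; apply/implyP; apply: H2.
Qed.

Section Widen.
Variables (m a b a' b' : nat) (ha : a <= a') (hb : b <= b').
Definition wid (c : 'I_a * 'I_b) : 'I_a' * 'I_b' := (widen_ord ha c.1, widen_ord hb c.2).
Lemma wid_inj : injective wid.
Proof.
move=> [x1 y1] [x2 y2] [] e1 e2.
by congr pair; apply: val_inj.
Qed.

Lemma cnt_widen C k : size C <= a -> (forall j, nth 0 C j <= b) ->
  cnt m a b C k = cnt m a' b' C k.
Proof.
move=> hsz hh; rewrite /cnt.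
rewrite -(card_imset _ (imset_inj wid_inj)).
apply: eq_card => S'; rewrite [in RHS]inE.
apply/imsetP/idP.
- move=> [S]; rewrite inE => /andP [/plcP [H1 H2] /eqP hk] ->.
  rewrite card_imset; last exact: wid_inj.
  rewrite hk eqxx andbT; apply/plcP; split.
  + by move=> c /imsetP [c0 /H1 h0 ->].
  + move=> c d /imsetP [c0 c0S ->] /imsetP [d0 d0S ->] hne.
    have hne0 : c0 != d0 by apply: contra hne => /eqP ->.
    exact: (H2 _ _ c0S d0S hne0).
- move=> /andP [/plcP [H1 H2] /eqP hk].
  have inr : forall c, c \in S' -> exists c0, c = wid c0.
    move=> c /H1 hc.
    have h1 : c.1 < a.
      apply: leq_trans hsz; rewrite ltnNge; apply/negP => hge.
      by move: hc; rewrite nth_default.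
    have h2 : c.2 < b by apply: leq_trans hc _.
    exists (Ordinal h1, Ordinal h2); move: h1 h2; case: c {hc} => x y /= h1 h2.
    by congr pair; apply: val_inj.
  have eS : wid @: (wid @^-1: S') = S'.
    apply/setP => c; apply/imsetP/idP.
    + by move=> [c0]; rewrite inE => h ->.
    + by move=> hc; case: (inr c hc) => c0 e; exists c0; rewrite // inE -e.
  exists (wid @^-1: S') => //.
  rewrite inE; apply/andP; split.
  + apply/plcP; split.
    * by move=> c; rewrite inE => /H1.
    * move=> c d; rewrite !inE => cS dS hne.
      have hne' : wid c != wid d by apply: contra hne => /eqP /wid_inj ->.
      exact: (H2 _ _ cS dS hne').
  + by rewrite -hk -{2}eS card_imset //; exact: wid_inj.
Qed.
End Widen.

Lemma divn_eqP m r l : 0 < m -> (r %/ m == l) = (l * m <= r < l.+1 * m).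
Proof.
move=> hm; apply/eqP/andP.
- move=> <-; split; first by rewrite -leq_divRL.
  by rewrite -ltn_divLR.
- move=> [h1 h2]; apply/eqP; rewrite eqn_leq; apply/andP; split.
  + by rewrite -ltnS ltn_divLR.
  + by rewrite leq_divRL.
Qed.

Lemma block_count m b c l : 0 < m -> l.+1 * m <= c -> c <= b ->
  \sum_(r < b) ((r < c) && (r %/ m == l) : nat) = m.
Proof.
move=> hm hl hc.
rewrite -(big_mkord xpredT (fun r => ((r < c) && (r %/ m == l) : nat))).
have h1 : 0 <= l * m by [].
have h2 : l * m <= l.+1 * m by rewrite leq_mul2r leqnSn orbT.
have h3 : l.+1 * m <= b by apply: leq_trans hc.
rewrite (big_cat_nat (n:=l * m) h1 (leq_trans h2 h3)) (big_cat_nat (n:=l.+1 * m) h2 h3) /=.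
rewrite big1_seq; last first.
  move=> r /andP [_]; rewrite mem_index_iota => /andP [_ hr].
  by rewrite divn_eqP // (leqNgt (l * m) r) hr /= andbF.
rewrite [X in _ + (_ + X)]big1_seq; last first.
  move=> r /andP [_]; rewrite mem_index_iota => /andP [hr _].
  by rewrite divn_eqP // (ltnNge r (l.+1 * m)) hr /= !andbF.
rewrite (@eq_big_nat _ _ _ _ _ _ (fun _ => 1)); last first.
  move=> r hr; rewrite divn_eqP // hr andbT.
  by move: hr => /andP [_ hr]; rewrite (leq_trans hr hl).
rewrite sum_nat_const_nat; lia.
Qed.

Lemma card_sum (T : finType) (P : pred T) : #|[set x | P x]| = \sum_(x : T) (P x : nat).
Proof. by rewrite -sum1dep_card big_mkcond. Qed.

Lemma free_count m a b C c (S : {set 'I_a * 'I_b}) : 0 < m -> c <= b -> plc m C S ->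
  (forall d, d \in S -> (d.2 %/ m).+1 * m <= c) ->
  #|[set r : 'I_b | (r < c) && [forall d in S, d.2 %/ m != r %/ m]]| + m * #|S| = c.
Proof.
move=> hm hcb /plcP [_ H2] hlev.
have tot : \sum_(r < b) (r < c : nat) = c.
  rewrite -(big_mkord xpredT (fun r => (r < c : nat))).
  rewrite (big_cat_nat (n:=c) (leq0n c) hcb) /=.
  rewrite (@eq_big_nat _ _ _ 0 c _ (fun _ => 1)); last by move=> r /andP [_ ->].
  rewrite [X in _ + X]big1_seq; last first.
    by move=> r /andP [_]; rewrite mem_index_iota => /andP [hr _]; rewrite leqNgt in hr; rewrite (negbTE hr).
  by rewrite sum_nat_const_nat; lia.
have split1 : forall r : 'I_b, (r < c : nat) =
   ((r < c) && [forall d in S, d.2 %/ m != r %/ m] : nat) +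
   ((r < c) && ~~ [forall d in S, d.2 %/ m != r %/ m] : nat).
  by move=> r; case: (r < c); case: [forall _ in _, _].
have inner : forall r : 'I_b,
   ((r < c) && ~~ [forall d in S, d.2 %/ m != r %/ m] : nat) =
   \sum_(d in S) ((r < c) && (r %/ m == d.2 %/ m) : nat).
  move=> r; case: (boolP [forall d in S, d.2 %/ m != r %/ m]) => hf /=.
    rewrite andbF big1 // => d dS; move/forall_inP: hf => /(_ d dS).
    by rewrite eq_sym => /negbTE ->; rewrite andbF.
  move: hf; rewrite negb_forall_in => /existsP [d0 /andP [d0S]].
  rewrite negbK => /eqP hd0.
  rewrite (bigD1 d0) //= big1; last first.
    move=> d /andP [dS hne]; have := H2 _ _ dS d0S hne.
    by move=> /andP [_ hl]; rewrite -hd0 eq_sym (negbTE hl) andbF.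
  by rewrite hd0 eqxx addn0.
rewrite card_sum -[in RHS]tot.
rewrite (eq_bigr _ (fun r _ => split1 r)) big_split /=; congr (_ + _).
rewrite (eq_bigr _ (fun r _ => inner r)) exchange_big /=.
rewrite (eq_bigr (fun _ => m)); last first.
  move=> d dS; apply: block_count => //; exact: hlev.
by rewrite sum_nat_const mulnC.
Qed.

Definition freeS m a b (S : {set 'I_a * 'I_b}) (r : 'I_b) :=
  [forall d in S, d.2 %/ m != r %/ m].

Section Rcons.
Variables (m a b : nat) (C : seq nat) (c : nat).
Hypotheses (hm : 0 < m) (hN : size C < a) (hcb : c <= b).
Local Notation N := (size C).
Local Notation C' := (rcons C c).
Local Notation T := ('I_a * 'I_b)%type.

Lemma nthC' j : nth 0 C' j = if j < N then nth 0 C j else if j == N then c else 0.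
Proof. by rewrite nth_rcons. Qed.

Lemma cellC (S : {set T}) d : plc m C S -> d \in S -> d.1 < N.
Proof.
move=> /plcP [H1 _] /H1 hd; rewrite ltnNge; apply/negP => hge.
by move: hd; rewrite nth_default.
Qed.

Definition colN (S : {set T}) := [exists d in S, d.1 == N :> nat].

Lemma plc_noN (S : {set T}) : plc m C' S && ~~ colN S = plc m C S.
Proof.
apply/idP/idP.
- move=> /andP [/plcP [H1 H2] hn]; apply/plcP; split => // d dS.
  have := H1 d dS; rewrite nthC'.
  case: ifP => // _; case: ifP => // /eqP e.
  exfalso; move/negP: hn; apply; apply/existsP; exists d; by rewrite dS e eqxx.
- move=> hp; have hc := cellC hp; move/plcP: hp => [H1 H2].
  apply/andP; split.
  + apply/plcP; split => // d dS; rewrite nthC' (hc d dS); exact: H1.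
  + apply/existsP => [[d /andP [dS /eqP e]]]; have := hc d dS; by rewrite e ltnn.
Qed.

Definition ordN : 'I_a := Ordinal hN.
Definition phi (p : {set T} * 'I_b) : {set T} := (ordN, p.2) |: p.1.

Definition Dset k := [set p : {set T} * 'I_b |
   (plc m C p.1 && (#|p.1| == k)) && ((p.2 < c) && freeS m p.1 p.2)].

Lemma phi_inj k : {in Dset k &, injective phi}.
Proof.
move=> [S1 r1] [S2 r2]; rewrite !inE /= => /andP [/andP [p1 _] _] /andP [/andP [p2 _] _].
rewrite /phi /= => e.
have hx : (ordN, r1) \in (ordN, r2) |: S2 by rewrite -e setU11.
move: hx; rewrite in_setU1 => /orP [/eqP [er]|hx]; last first.
  by have := cellC p2 hx; rewrite /= ltnn.
subst r2; congr pair.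
have n1 : (ordN, r1) \notin S1 by apply/negP => /(cellC p1); rewrite /= ltnn.
have n2 : (ordN, r1) \notin S2 by apply/negP => /(cellC p2); rewrite /= ltnn.
by rewrite -(setU1K n1) e setU1K.
Qed.

Lemma phi_mem k p : p \in Dset k ->
  phi p \in [predI [set S | plc m C' S && (#|S| == k.+1)] & [set S | colN S]].
Proof.
case: p => S r; rewrite inE /= => /andP [/andP [hp /eqP hk] /andP [hr hf]].
have hc := cellC hp.
have nS : (ordN, r) \notin S by apply/negP => /hc; rewrite /= ltnn.
rewrite inE /= !inE /phi /=; apply/andP; split; last first.
  by apply/existsP; exists (ordN, r); rewrite setU11 eqxx.
rewrite cardsU1 nS hk add1n eqxx andbT.
move/plcP: hp => [H1 H2]; apply/plcP; split.
- move=> d; rewrite in_setU1 => /orP [/eqP -> /=|dS]; first by rewrite nthC' ltnn eqxx.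
  by rewrite nthC' (hc d dS); exact: H1.
- move=> d1 d2; rewrite !in_setU1 => /orP [/eqP e1|d1S] /orP [/eqP e2|d2S] hne.
  + by rewrite e1 e2 eqxx in hne.
  + subst d1 => /=; rewrite -(inj_eq val_inj) /= eq_sym neq_ltn (hc _ d2S) /=.
    by move/forall_inP: hf => /(_ d2 d2S); rewrite eq_sym.
  + subst d2 => /=; rewrite -(inj_eq val_inj) /= neq_ltn (hc _ d1S) /=.
    by move/forall_inP: hf => /(_ d1 d1S).
  + exact: H2.
Qed.

Lemma phi_surj k S : S \in [predI [set S | plc m C' S && (#|S| == k.+1)] & [set S | colN S]] ->
  exists2 p, p \in Dset k & S = phi p.
Proof.
rewrite inE /= !inE => /andP [/andP [hp /eqP hk] /existsP [d0 /andP [d0S /eqP e0]]].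
move/plcP: hp => [H1 H2].
have ed0 : d0 = (ordN, d0.2).
  by case: d0 d0S e0 {H1 H2} => x y /= _ e; congr pair; apply: val_inj.
exists (S :\ d0, d0.2); last by rewrite /phi /= -ed0 setD1K.
rewrite inE /=; apply/andP; split; [apply/andP; split | apply/andP; split].
- apply/plcP; split.
  + move=> d; rewrite in_setD1 => /andP [hne dS].
    have := H2 _ _ dS d0S hne => /andP [hcol _].
    have hn : (d.1 == N :> nat) = false by apply/negbTE; rewrite -e0; exact: hcol.
    by have := H1 d dS; rewrite nthC' hn; case: ifP.
  + move=> d1 d2; rewrite !in_setD1 => /andP [_ d1S] /andP [_ d2S]; exact: H2.
- by move: hk; rewrite (cardsD1 d0) d0S add1n => [[->]].
- by have := H1 d0 d0S; rewrite e0 nthC' ltnn eqxx.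
- apply/forall_inP => d; rewrite in_setD1 => /andP [hne dS].
  by have := H2 _ _ dS d0S hne => /andP [_].
Qed.

Lemma cnt_rcons k : cnt m a b C' k.+1 = cnt m a b C k.+1 +
  \sum_(S : {set T} | plc m C S && (#|S| == k)) #|[set r : 'I_b | (r < c) && freeS m S r]|.
Proof.
rewrite /cnt -(cardID [set S | colN S]); rewrite addnC; congr (_ + _).
- apply: eq_card => S; rewrite !inE -plc_noN.
  by case: (plc m C' S); case: (colN S); case: (#|S| == k.+1).
- transitivity #|phi @: Dset k|.
    apply: eq_card => S; apply/idP/imsetP.
    + by move/phi_surj.
    + by move=> [p hp ->]; apply: phi_mem.
  rewrite (card_in_imset (@phi_inj k)).
  rewrite -sum1_card /Dset.
  rewrite (eq_bigl (fun p : {set T} * 'I_b => (plc m C p.1 && (#|p.1| == k)) && ((p.2 < c) && freeS m p.1 p.2))); last by move=> p; rewrite inE.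
  rewrite -(pair_big_dep (fun S : {set T} => plc m C S && (#|S| == k)) (fun S (r : 'I_b) => (r < c) && freeS m S r) (fun _ _ => 1)) /=.
  by apply: eq_bigr => S _; rewrite sum1dep_card.
Qed.

End Rcons.

Lemma cnt0 m a b C : cnt m a b C 0 = 1.
Proof.
rewrite /cnt (_ : [set S : {set 'I_a * 'I_b} | _] = [set set0]) ?cards1 //.
apply/setP => S; rewrite !inE; apply/idP/idP.
- by move=> /andP [_]; rewrite cards_eq0.
- move=> /eqP ->; rewrite cards0 eqxx andbT; apply/plcP; split => c; by rewrite inE.
Qed.

Lemma cnt_nil m a b k : cnt m a b [::] k.+1 = 0.
Proof.
rewrite /cnt; apply/eqP; rewrite cards_eq0; apply/eqP/setP => S; rewrite !inE.
apply/negbTE; apply/negP => /andP [/plcP [H1 _] hk].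
have : 0 < #|S| by rewrite (eqP hk).
rewrite card_gt0 => /set0Pn [d /H1]; by rewrite nth_nil.
Qed.

Definition goodb m (C : seq nat) := sorted leq C /\
  forall j, j.+1 < size C -> nth 0 C j %% m != 0 -> nth 0 C j %/ m < nth 0 C j.+1 %/ m.

Lemma goodb_rcons m C c : goodb m (rcons C c) -> goodb m C.
Proof.
move=> [hs hg]; split.
- by move: hs; rewrite -cats1 => /(cat_sorted2) [].
- move=> j hj; have := hg j; rewrite size_rcons !nth_rcons hj (ltn_trans (ltnSn _) hj).
  by apply; apply: ltn_trans hj _.
Qed.

Lemma goodb_lev m C c : 0 < m -> goodb m (rcons C c) ->
  forall j r, r < nth 0 C j -> (r %/ m).+1 * m <= c.
Proof.
move=> hm [hs hg] j r hr.
have hj : j < size C by rewrite ltnNge; apply/negP => h; move: hr; rewrite nth_default.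
have hle : nth 0 (rcons C c) j.+1 <= c.
  have := sorted_leq_nth leq_trans leqnn 0 hs.
  move=> /(_ j.+1 (size C)); rewrite !inE size_rcons !ltnS hj leqnn => /(_ isT isT isT).
  by rewrite [nth _ _ (size C)]nth_rcons ltnn eqxx.
have hb : nth 0 (rcons C c) j = nth 0 C j by rewrite nth_rcons hj.
have hlt : r %/ m < nth 0 (rcons C c) j.+1 %/ m.
  case: (boolP (nth 0 C j %% m == 0)) => h0.
  - apply: (@leq_trans (nth 0 C j %/ m)).
      rewrite ltn_divLR //; move: h0 => /eqP h0.
      by rewrite {1}(divn_eq (nth 0 C j) m) h0 addn0 in hr.
    apply: leq_div2r; rewrite -hb.
    have := sorted_leq_nth leq_trans leqnn 0 hs.
    by move=> /(_ j j.+1); rewrite !inE size_rcons ltnS (ltnW hj) ltnS hj => /(_ isT isT (leqnSn _)).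
  - have := hg j; rewrite size_rcons ltnS hj hb => /(_ isT h0).
    by apply: leq_ltn_trans; apply: leq_div2r; apply: ltnW.
apply: leq_trans hle; rewrite -leq_divRL //.
Qed.

Definition stepb m (h : nat) (S : nat -> int) : nat -> int :=
  fun k => match k with 0 => S 0 | k'.+1 => (S k'.+1 + S k' * (Posz h - Posz (m * k')%N))%R end.
Definition delta0 : nat -> int := fun k => Posz (k == 0).
Definition Fb m (C : seq nat) : nat -> int := foldl (fun S h => stepb m h S) delta0 C.

Lemma cnt_Fb m a b C : 0 < m -> goodb m C -> size C <= a -> (forall j, nth 0 C j <= b) ->
  forall k, Posz (cnt m a b C k) = Fb m C k.
Proof.
move=> hm; elim/last_ind: C => [|C c IH] hg ha hb k.
- by case: k => [|k]; rewrite /Fb /= ?cnt0 ?cnt_nil.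
have hg0 := goodb_rcons hg.
have ha0 : size C < a by move: ha; rewrite size_rcons.
have hb0 : forall j, nth 0 C j <= b.
  move=> j; have := hb j; rewrite nth_rcons; case: ifP => // hj.
  by rewrite nth_default // leqNgt hj.
have hcb : c <= b by have := hb (size C); rewrite nth_rcons ltnn eqxx.
rewrite /Fb foldl_rcons -/(Fb m C).
case: k => [|k]; first by rewrite /= !cnt0 -IH // ?cnt0 // ltnW.
rewrite /= (cnt_rcons m b c ha0).
have hlev := goodb_lev hm hg.
have hsum : \sum_(S : {set 'I_a * 'I_b} | plc m C S && (#|S| == k))
     #|[set r : 'I_b | (r < c) && freeS m S r]| =
   \sum_(S : {set 'I_a * 'I_b} | plc m C S && (#|S| == k)) (c - m * k).
  apply: eq_bigr => S /andP [hp /eqP hk].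
  have h := free_count hm hcb hp.
  have h' : forall d, d \in S -> (d.2 %/ m).+1 * m <= c.
    by move=> d dS; move/plcP: hp => [H1 _]; apply: hlev; apply: H1.
  move: (h h'); rewrite hk /freeS; lia.
rewrite hsum sum_nat_cond_const -/(cnt m a b C k) PoszD.
have IH' := IH hg0 (ltnW ha0) hb0.
rewrite IH'.
congr (_ + _)%R; rewrite PoszM.
case: (posnP (cnt m a b C k)) => hc0.
  by rewrite hc0 -IH ?hc0 ?mul0r // ltnW.
rewrite -IH ?subzn //; last exact: ltnW.
move: hc0; rewrite /cnt card_gt0 => /set0Pn [S]; rewrite inE => /andP [hp /eqP hk].
have := free_count hm hcb hp; rewrite hk => <-; first by rewrite leq_addl.
by move=> d dS; move/plcP: hp => [H1 _]; apply: hlev; apply: H1.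
Qed.

Definition stepz m (j x : nat) (S : nat -> int) : nat -> int :=
  fun k => match k with 0 => S 0 | k'.+1 =>
    (S k'.+1 + S k' * (Posz (m * j)%N - Posz x - Posz (m * k')%N))%R end.

Fixpoint Zrun m (j : nat) (z : seq nat) (S : nat -> int) : nat -> int :=
  if z is x :: s then Zrun m j.+1 s (stepz m j x S) else S.

Lemma stepz_swap m j x y S :
  stepz m j.+1 y (stepz m j x S) = stepz m j.+1 x (stepz m j y S).
Proof.
apply: functional_extensionality => k; case: k => [|[|k]] //=.
- rewrite !muln0 !subr0; ring.
- rewrite !PoszM ?PoszD /=.
  ring.
Qed.

Lemma Zrun_front m j s1 x s2 S :
  Zrun m j (s1 ++ x :: s2) S = Zrun m j (x :: s1 ++ s2) S.
Proof.
elim: s1 j S => [|y s1 IH] j S //=.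
rewrite IH /=; congr Zrun; exact: stepz_swap.
Qed.

Lemma Zrun_perm m s t j S : perm_eq s t -> Zrun m j s S = Zrun m j t S.
Proof.
elim: s t j S => [|x s IH] t j S.
  by rewrite perm_sym => /perm_nilP ->.
move=> hp.
have xt : x \in t by rewrite -(perm_mem hp) mem_head.
move: hp; case/splitPr: xt => t1 t2 hp.
rewrite Zrun_front /=; apply: IH.
have h2 : perm_eq (t1 ++ x :: t2) (x :: t1 ++ t2).
  by rewrite -cat1s perm_catCA.
by rewrite -(perm_cons x); exact: perm_trans hp h2.
Qed.

Fixpoint bfrom m (j : nat) (z : seq nat) : seq nat :=
  if z is x :: s then (m * j - x) :: bfrom m j.+1 s else [::].

Lemma Fb_bfrom m j z S : (forall i, i < size z -> nth 0 z i <= m * (j + i)) ->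
  foldl (fun S h => stepb m h S) S (bfrom m j z) = Zrun m j z S.
Proof.
elim: z j S => [|x s IH] j S //= hz.
rewrite IH; last by move=> i hi; have := hz i.+1 hi; rewrite addSnnS.
congr Zrun; apply: functional_extensionality => k; case: k => [|k] //=.
have hx : x <= m * j by have := hz 0 isT; rewrite addn0.
by rewrite -subzn.
Qed.

Lemma compl m x y j : 0 < m -> x + y = j * m ->
  (y %% m = 0 -> x %% m = 0 /\ x %/ m + y %/ m = j) /\
  (y %% m <> 0 -> x %% m = m - y %% m /\ (x %/ m + y %/ m).+1 = j).
Proof.
move=> hm e.
have hd : (x + y) %/ m = j by rewrite e mulnK.
have hr : (x + y) %% m = 0 by rewrite e modnMl.
rewrite divnD // in hd; rewrite modnD // in hr.
have rx := ltn_pmod x hm; have ry := ltn_pmod y hm.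
move: hd hr; case: (leqP m (x %% m + y %% m)) => h /= hd hr; split => hy.
- lia.
- lia.
- lia.
- lia.
Qed.

Definition fm m x := (x %/ m).+1 * m.

Definition validz m (z : seq nat) := nth 0 z 0 = 0 /\
  forall j, j.+1 < size z -> nth 0 z j.+1 <= fm m (nth 0 z j).

Lemma fm_le m x : 0 < m -> fm m x <= x + m.
Proof. move=> hm; rewrite /fm mulSn addnC leq_add2r {2}(divn_eq x m); exact: leq_addr. Qed.

Lemma fm_gt m x : 0 < m -> x < fm m x.
Proof. move=> hm; exact: ltn_ceil. Qed.

Lemma fm_mono m x y : x <= y -> fm m x <= fm m y.
Proof. move=> h; rewrite /fm leq_mul2r ltnS leq_div2r ?orbT //. Qed.

Lemma validz_bound m z : 0 < m -> validz m z -> forall i, i < size z -> nth 0 z i <= m * i.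
Proof.
move=> hm [h0 hv]; elim => [|i IH] hi; first by rewrite h0.
have := hv i hi; have := IH (ltnW hi); have := fm_le (nth 0 z i) hm.
rewrite mulnS; lia.
Qed.

Lemma size_bfrom m j z : size (bfrom m j z) = size z.
Proof. by elim: z j => [|x s IH] j //=; rewrite IH. Qed.

Lemma nth_bfrom m j z i : i < size z -> nth 0 (bfrom m j z) i = m * (j + i) - nth 0 z i.
Proof.
elim: z j i => [|x s IH] j [|i] //=; first by rewrite addn0.
by move=> hi; rewrite IH // addSnnS.
Qed.

Lemma validz_goodb m z : 0 < m -> validz m z -> goodb m (bfrom m 0 z).
Proof.
move=> hm hv; have hb := validz_bound hm hv; case: hv => [h0 hv]; split.
- apply/(sortedP 0) => i; rewrite size_bfrom => hi.
  rewrite !nth_bfrom //; last exact: ltnW.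
  have := hv i hi; have := hb i (ltnW hi); have := hb i.+1 hi.
  have := fm_le (nth 0 z i) hm; rewrite !add0n mulnS; lia.
- move=> j; rewrite size_bfrom => hj.
  rewrite !nth_bfrom //; last exact: ltnW.
  rewrite !add0n => hy.
  set x := nth 0 z j; set y := m * j - x.
  have hx : x <= m * j by apply: hb; apply: ltnW.
  have e : x + y = j * m by rewrite /y subnKC // mulnC.
  have [_ /(_ (elimN eqP hy)) [_ hq]] := compl hm e.
  rewrite leq_divRL //.
  have hz1 := hv j hj; rewrite -/x /fm in hz1.
  have hz1b := hb j.+1 hj.
  set A := x %/ m in hq hz1.
  set B := y %/ m in hq *.
  have hA : A * m <= j * m by rewrite leq_mul2r; apply/orP; right; lia.
  have hB : B.+1 * m = j * m - A * m by rewrite -mulnBl; congr (_ * _); lia.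
  rewrite hB; move: hz1 hz1b hA; rewrite !mulSn mulnS [m * j]mulnC; lia.
Qed.

Definition zof m (B : seq nat) := [seq m * j - nth 0 B j | j <- iota 0 (size B)].

Lemma nth_zof m B j : j < size B -> nth 0 (zof m B) j = m * j - nth 0 B j.
Proof. by move=> hj; rewrite (nth_map 0) ?size_iota // nth_iota. Qed.

Lemma board_to_z m B : 0 < m -> goodb m B ->
  (forall j, j < size B -> nth 0 B j <= m * j) ->
  validz m (zof m B) /\ bfrom m 0 (zof m B) = B.
Proof.
move=> hm [hs hg] hle.
have hsz : size (zof m B) = size B by rewrite size_map size_iota.
have hsort : forall i, i.+1 < size B -> nth 0 B i <= nth 0 B i.+1.
  by move=> i hi; move/(sortedP 0): hs; apply.
split; last first.
  apply: (@eq_from_nth _ 0); first by rewrite size_bfrom.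
  move=> i; rewrite size_bfrom hsz => hi.
  by rewrite nth_bfrom ?hsz // nth_zof // add0n subKn // hle.
split.
  case: (posnP (size B)) => hB; first by rewrite nth_default // hsz hB.
  by rewrite nth_zof // muln0 sub0n.
move=> j; rewrite hsz => hj.
rewrite !nth_zof //; last exact: ltnW.
set y := nth 0 B j; set x := m * j - y.
have hy : y <= m * j by apply: hle; apply: ltnW.
have e : x + y = j * m by rewrite /x subnK // mulnC.
have [c1 c2] := compl hm e.
have hsj := hsort j hj; rewrite -/y in hsj.
have hb1 := hle j.+1 hj.
have hg' := hg j hj; rewrite -/y in hg'.
clearbody x y.
rewrite /fm; case: (posnP (y %% m)) => hym.
- have [_ hq] := c1 hym.
  have hY : y = y %/ m * m by rewrite {1}(divn_eq y m) hym addn0.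
  have hx : (x %/ m).+1 * m = j * m - y %/ m * m + m.
    rewrite mulSn addnC; congr (_ + _); rewrite -mulnBl; congr (_ * _).
    by rewrite -hq addnK.
  rewrite hx -hY; move: hsj hy hb1; rewrite mulnS [m * j]mulnC; lia.
- have hne : y %% m <> 0 by move=> h; rewrite h in hym.
  have [_ hq] := c2 hne.
  have := hg' (introN eqP hne); rewrite leq_divRL // => hb'.
  have hx : (x %/ m).+1 * m = j * m - y %/ m * m.
    rewrite -mulnBl; congr (_ * _); by rewrite -hq subSn ?leq_addl // addnK.
  have hyj : y %/ m * m <= j * m by rewrite leq_mul2r; apply/orP; right; rewrite -hq; exact: leq_trans (leq_addl _ _) (leqnSn _).
  rewrite hx; move: hb' hyj; rewrite mulSn mulnS [m * j]mulnC; lia.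
Qed.

Lemma floorm_nat m x : floorm m (Posz x) = Posz (x %/ m * m).
Proof.
rewrite /floorm modz_nat subzn ?leq_mod //; congr Posz.
by rewrite {1}(divn_eq x m) addnK.
Qed.

Lemma singleton_iff m C : 0 < m -> singleton m C <->
  (forall j, j.+1 < size C -> nth 0 C j %% m != 0 -> nth 0 C j %/ m < nth 0 C j.+1 %/ m).
Proof.
move=> hm.
have e1 : forall x, (Posz x - floorm m (Posz x) != 0)%R = (x %% m != 0).
  move=> x; rewrite floorm_nat subzn ?leq_divM //.
  by rewrite {1}(divn_eq x m) addKn.
have e2 : forall x y, (floorm m (Posz x) < floorm m (Posz y))%R = (x %/ m < y %/ m).
  by move=> x y; rewrite !floorm_nat ltz_nat ltn_mul2r hm.
rewrite /singleton; split => H j hj; have := H j hj; by rewrite e1 e2.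
Qed.

Lemma root_vec_bfrom m z : 0 < m -> validz m z -> root_vec m (bfrom m 0 z) = map Posz z.
Proof.
move=> hm hv; have hb := validz_bound hm hv.
apply: (@eq_from_nth _ 0%R); first by rewrite size_map size_iota size_bfrom size_map.
move=> i; rewrite size_map size_iota size_bfrom => hi.
rewrite /root_vec (nth_map 0) ?size_iota ?size_bfrom //.
rewrite nth_iota // (nth_map 0) // nth_bfrom // !add0n.
by rewrite subzn ?leq_subr // subKn // hb.
Qed.

Lemma nth_le_sumn (s : seq nat) j : nth 0 s j <= sumn s.
Proof.
elim: s j => [|x s IH] [|j] //=; first exact: leq_addr.
by apply: leq_trans (IH j) _; exact: leq_addl.
Qed.

Lemma rook_valid m z k : 0 < m -> validz m z ->
  Posz (rook_num m (bfrom m 0 z) k) = Zrun m 0 z delta0 k.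
Proof.
move=> hm hv.
rewrite rook_num_cnt (cnt_Fb hm (validz_goodb hm hv) (leqnn _) (fun j => nth_le_sumn _ j)).
by rewrite /Fb Fb_bfrom // => i hi; rewrite add0n; exact: validz_bound.
Qed.

Lemma rook_perm m z z' : 0 < m -> validz m z -> validz m z' -> perm_eq z z' ->
  rook_equiv m (bfrom m 0 z) (bfrom m 0 z').
Proof.
move=> hm hv hv' hp k; apply/eqP; rewrite -eqz_nat; apply/eqP.
by rewrite !rook_valid // (Zrun_perm _ _ _ hp).
Qed.

Definition tau (p r i : nat) := if i == p then r else if i == r then p else i.
Definition swapz (z : seq nat) p r := [seq nth 0 z (tau p r i) | i <- iota 0 (size z)].

Lemma size_swapz z p r : size (swapz z p r) = size z.
Proof. by rewrite size_map size_iota. Qed.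

Lemma nth_swapz z p r i : i < size z -> nth 0 (swapz z p r) i = nth 0 z (tau p r i).
Proof. by move=> hi; rewrite (nth_map 0) ?size_iota // nth_iota. Qed.

Lemma tauK p r : involutive (tau p r).
Proof.
move=> i; rewrite /tau.
have [eip|hip] := eqVneq i p.
- subst i; rewrite eqxx /=.
  by have [erp|hrp] := eqVneq r p.
- have [eir|hir] := eqVneq i r.
  + subst i; rewrite eqxx /=.
    done.
  + by rewrite /= (negbTE hip) (negbTE hir).
Qed.

Lemma tau_lt p r n i : p < n -> r < n -> i < n -> tau p r i < n.
Proof. by move=> hp hr hi; rewrite /tau; case: ifP => //; case: ifP. Qed.

Lemma perm_swapz z p r : p < size z -> r < size z -> perm_eq z (swapz z p r).
Proof.
move=> hp hr.
have ez : z = [seq nth 0 z i | i <- iota 0 (size z)].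
  apply: (@eq_from_nth _ 0); first by rewrite size_map size_iota.
  by move=> i hi; rewrite (nth_map 0) ?size_iota // nth_iota.
have -> : swapz z p r = map (nth 0 z) (map (tau p r) (iota 0 (size z))) by rewrite -map_comp.
rewrite {1}ez.
apply: perm_map; apply: uniq_perm; first exact: iota_uniq.
  by rewrite map_inj_uniq ?iota_uniq //; exact: (can_inj (tauK p r)).
move=> i; rewrite mem_iota add0n; apply/idP/mapP.
- move=> hi; exists (tau p r i); last by rewrite tauK.
  by rewrite mem_iota add0n tau_lt.
- by move=> [j]; rewrite mem_iota add0n => hj ->; rewrite tau_lt.
Qed.

Definition mv m (z : seq nat) p r := [/\ 0 < p < r, r < size z,
  nth 0 z p < nth 0 z r, nth 0 z r <= fm m (nth 0 z p.-1) &
  (r.+1 < size z -> nth 0 z r.+1 <= fm m (nth 0 z p))].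

Lemma mv_valid m z p r : 0 < m -> validz m z -> mv m z p r -> validz m (swapz z p r).
Proof.
move=> hm [h0 hv] [/andP [hp0 hpr] hrn hlt hle hnext].
have hpn : p < size z by apply: ltn_trans hrn.
split.
  rewrite nth_swapz; last by apply: leq_ltn_trans hpn.
  by rewrite /tau (ltn_eqF hp0) (ltn_eqF (ltn_trans hp0 hpr)).
move=> j; rewrite size_swapz => hj.
rewrite !nth_swapz //; last exact: ltnW.
have hfp := fm_gt (nth 0 z p) hm; have hfr := fm_gt (nth 0 z r) hm.
rewrite /tau.
case: (eqVneq j.+1 p) => [ejp|njp].
  have -> : j == p = false by apply/negbTE/eqP; lia.
  have -> : j == r = false by apply/negbTE/eqP; lia.
  by rewrite -ejp /= in hle.
case: (eqVneq j p) => [ejp|njp'].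
  subst j; case: (eqVneq p.+1 r) => [epr|npr].
    by apply: leq_trans (ltnW hfr); apply: ltnW.
  by apply: leq_trans (hv p hj) (fm_mono m (ltnW hlt)).
case: (eqVneq j.+1 r) => [ejr|njr].
  have -> : j == r = false by apply/negbTE/eqP; lia.
  by apply: leq_trans (ltnW hlt) _; have := hv j hj; rewrite ejr.
case: (eqVneq j r) => [ejr'|njr'].
  by subst j; apply: hnext.
exact: hv.
Qed.

Definition psi (z : seq nat) := \sum_(0 <= i < size z) i * nth 0 z i.

Lemma split5 (h : nat -> nat) p r n : p < r -> r < n ->
  \sum_(0 <= i < n) h i = \sum_(0 <= i < p) h i + h p + \sum_(p.+1 <= i < r) h i + h r +
     \sum_(r.+1 <= i < n) h i.
Proof.
move=> hpr hrn.
rewrite (big_cat_nat (n:=p)) //=; last by apply: ltnW; apply: ltn_trans hrn.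
rewrite (big_cat_nat (n:=p.+1) (m:=p)) //=; last by apply: ltn_trans hrn.
rewrite big_nat1 (big_cat_nat (n:=r) (m:=p.+1)) //=; last exact: ltnW.
rewrite (big_cat_nat (n:=r.+1) (m:=r)) //= big_nat1.
by rewrite !addnA.
Qed.

Lemma psi_swap z p r : p < r -> r < size z -> nth 0 z p < nth 0 z r ->
  psi (swapz z p r) < psi z.
Proof.
move=> hpr hrn hlt; rewrite /psi size_swapz.
rewrite (split5 (fun i => i * nth 0 (swapz z p r) i) hpr hrn).
rewrite (split5 (fun i => i * nth 0 z i) hpr hrn).
have hpn : p < size z by apply: ltn_trans hrn.
rewrite !nth_swapz // /tau eqxx (gtn_eqF hpr) eqxx.
have eq1 : \sum_(0 <= i < p) i * nth 0 (swapz z p r) i = \sum_(0 <= i < p) i * nth 0 z i.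
  apply: eq_big_nat => i /andP [_ hi]; rewrite nth_swapz; last by apply: ltn_trans hpn.
  by rewrite /tau (ltn_eqF hi) (ltn_eqF (ltn_trans hi hpr)).
have eq2 : \sum_(p.+1 <= i < r) i * nth 0 (swapz z p r) i = \sum_(p.+1 <= i < r) i * nth 0 z i.
  apply: eq_big_nat => i /andP [h1 h2]; rewrite nth_swapz; last by apply: ltn_trans hrn.
  by rewrite /tau (gtn_eqF h1) (ltn_eqF h2).
have eq3 : \sum_(r.+1 <= i < size z) i * nth 0 (swapz z p r) i = \sum_(r.+1 <= i < size z) i * nth 0 z i.
  apply: eq_big_nat => i /andP [h1 h2]; rewrite nth_swapz //.
  by rewrite /tau (gtn_eqF (ltn_trans hpr h1)) (gtn_eqF h1).
rewrite eq1 eq2 eq3.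
have : p * nth 0 z r + r * nth 0 z p < p * nth 0 z p + r * nth 0 z r by nia.
lia.
Qed.


Definition zstep m (z w : seq nat) :=
  validz m z /\ exists p r, mv m z p r /\ w = swapz z p r.

Lemma reach m (Q tg : seq nat -> Prop) : 0 < m ->
  (forall z, validz m z -> Q z -> ~ tg z -> exists p r, mv m z p r) ->
  (forall z p r, Q z -> mv m z p r -> Q (swapz z p r)) ->
  forall z, validz m z -> Q z ->
  exists w, [/\ clos_refl_trans _ (zstep m) z w, tg w, validz m w & perm_eq z w].
Proof.
move=> hm hex hQ z.
move: {2}(psi z) (leqnn (psi z)) => n; elim: n z => [|n IH] z hn hv hq.
- case: (classic (tg z)) => ht; first by exists z; split => //; apply: rt_refl.
  have [p [r hmv]] := hex z hv hq ht.
  case: hmv => [/andP [hp0 hpr] hrn hlt _ _].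
  by have := psi_swap hpr hrn hlt; rewrite leqn0 in hn; rewrite (eqP hn).
- case: (classic (tg z)) => ht; first by exists z; split => //; apply: rt_refl.
  have [p [r hmv]] := hex z hv hq ht.
  have hmv' := hmv; case: hmv' => [/andP [hp0 hpr] hrn hlt _ _].
  have hps := psi_swap hpr hrn hlt.
  have hv' := mv_valid hm hv hmv.
  have [w [hr ht' hvw hpw]] := IH (swapz z p r) (leq_trans hps hn) hv' (hQ _ _ _ hq hmv).
  exists w; split => //.
  + apply: rt_trans hr; apply: rt_step; split => //; by exists p, r.
  + apply: perm_trans hpw; apply: perm_swapz => //; exact: ltn_trans hpr hrn.
Qed.

Lemma count_sum (z : seq nat) x :
  count_mem x z = \sum_(0 <= j < size z) (nth 0 z j == x : nat).
Proof.
elim: z => [|y s IH] /=; first by rewrite big_geq.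
by rewrite big_nat_recl // IH; congr (_ + _); rewrite eq_sym.
Qed.

Lemma count_two (z : seq nat) x i j : i < j -> j < size z ->
  nth 0 z i = x -> nth 0 z j = x -> 1 < count_mem x z.
Proof.
move=> hij hj hi hjx; rewrite count_sum.
have hi' : i < size z by apply: ltn_trans hj.
rewrite (split5 (fun k => (nth 0 z k == x : nat)) hij hj) hi hjx eqxx; lia.
Qed.

Lemma count_le1 (z : seq nat) x k :
  (forall j, j < size z -> j != k -> nth 0 z j != x) -> count_mem x z <= 1.
Proof.
move=> h; rewrite count_sum.
case: (ltnP k (size z)) => hk.
- rewrite (big_cat_nat (n:=k)) //=; last exact: ltnW.
  rewrite (big_cat_nat (n:=k.+1) (m:=k)) //= big_nat1.
  rewrite big1_seq; last first.
    move=> j /andP [_]; rewrite mem_index_iota => /andP [_ hj].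
    by rewrite (negbTE (h j (ltn_trans hj hk) (negbT (ltn_eqF hj)))).
  rewrite [X in _ + (_ + X)]big1_seq; last first.
    move=> j /andP [_]; rewrite mem_index_iota => /andP [hj1 hj2].
    by rewrite (negbTE (h j hj2 (negbT (gtn_eqF hj1)))).
  by rewrite add0n addn0; case: (_ == _).
- rewrite big1_seq // => j /andP [_]; rewrite mem_index_iota => /andP [_ hj].
  by rewrite (negbTE (h j hj (negbT (ltn_eqF (leq_trans hj hk))))).
Qed.

Lemma last_gt (z : seq nat) v i : i < size z -> v < nth 0 z i ->
  exists r, [/\ i <= r, r < size z, v < nth 0 z r &
              forall j, r < j -> j < size z -> nth 0 z j <= v].
Proof.
move=> hi hv.
have ex : exists r, (r < size z) && (v < nth 0 z r) by exists i; rewrite hi hv.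
have bd : forall r, (r < size z) && (v < nth 0 z r) -> r <= size z.
  by move=> r /andP [h _]; exact: ltnW.
case: (ex_maxnP ex bd) => r /andP [hr hvr] hmax.
exists r; split => //.
- by apply: hmax; rewrite hi hv.
- move=> j hrj hj; rewrite leqNgt; apply/negP => hvj.
  by have := hmax j; rewrite hj hvj => /(_ isT); rewrite leqNgt hrj.
Qed.

Definition Kof m M := if M is 0 then 0 else (M.-1 %/ m).+1.

Lemma Kof_lt m M j : 0 < m -> j < Kof m M -> j * m < M.
Proof.
move=> hm; rewrite /Kof; case: M => [|M] //= hj.
rewrite ltnS leq_divRL // in hj; lia.
Qed.

Lemma Kof_ge m M : 0 < m -> M <= Kof m M * m.
Proof.
move=> hm; rewrite /Kof; case: M => [|M] //=.
exact: ltn_ceil.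
Qed.

Lemma fm_mul m j : 0 < m -> fm m (j * m) = j.+1 * m.
Proof. by move=> hm; rewrite /fm mulnK. Qed.

Definition tgt m M (z : seq nat) := [/\ Kof m M < size z,
  forall j, j < Kof m M -> nth 0 z j = j * m & nth 0 z (Kof m M) = M].
Definition icond m (z : seq nat) a :=
  (1 < count_mem a z) || ((count_mem a z == 1) && ~~ (m %| a)).

Lemma exists_move m z M : 0 < m -> validz m z -> M \in z -> (forall x, x \in z -> x <= M) ->
  (forall a s, icond m z a -> a < s -> s < M -> m %| s -> 1 < count_mem s z) ->
  ~ tgt m M z -> exists p r, mv m z p r.
Proof.
move=> hm hv hM hmax hH hnt.
have [h0 hstep] := hv.
set K := Kof m M.
set L := fun j => if j < K then j * m else M.
have ex : exists j, (j <= K) && ((size z <= j) || (nth 0 z j != L j)).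
  apply: NNPP => hne; apply: hnt.
  have hall : forall j, j <= K -> j < size z /\ nth 0 z j = L j.
    move=> j hj.
    have : ~~ ((size z <= j) || (nth 0 z j != L j)).
      by apply/negP => h; apply: hne; exists j; rewrite hj h.
    by rewrite negb_or -ltnNge negbK => /andP [h1 /eqP h2].
  split.
  - by case: (hall K (leqnn K)).
  - move=> j hj; case: (hall j (ltnW hj)) => _ ->; by rewrite /L hj.
  - by case: (hall K (leqnn K)) => _ ->; rewrite /L ltnn.
case: (ex_minnP ex) => t /andP [htK ht] htmin.
have hpre : forall j, j < t -> j < size z /\ nth 0 z j = j * m.
  move=> j hjt; have hjK : j < K by apply: leq_trans hjt htK.
  have hnp : ~~ ((j <= K) && ((size z <= j) || (nth 0 z j != L j))).
    by apply/negP => /htmin; rewrite leqNgt hjt.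
  move: hnp; rewrite (ltnW hjK) /= negb_or -ltnNge negbK => /andP [h1 /eqP h2].
  by split => //; rewrite h2 /L hjK.
set u := index M z.
have hu : u < size z by rewrite index_mem.
have hzu : nth 0 z u = M by rewrite nth_index.
have htn : t < size z.
  rewrite ltnNge; apply/negP => hts.
  have hut : u < t by apply: leq_trans hu hts.
  have [_ e] := hpre u hut.
  by have := Kof_lt hm (leq_trans hut htK); rewrite -/K -e hzu ltnn.
have hzt : nth 0 z t != L t by move: ht; rewrite leqNgt htn.
have ht0 : 0 < t.
  rewrite lt0n; apply/negP => /eqP et; move: hzt; rewrite et h0 /L.
  case: (ltnP 0 K) => hK; first by rewrite mul0n eqxx.
  by move: hK; rewrite leqn0 /K /Kof; case: (M).
have hzt1 : nth 0 z t.-1 = t.-1 * m by case: (hpre t.-1); rewrite ?prednK // ltn_predL.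
have hfz1 : fm m (nth 0 z t.-1) = t * m by rewrite hzt1 fm_mul // prednK.
have hat : nth 0 z t <= t * m by rewrite -hfz1; have := hstep t.-1; rewrite prednK //; apply.
case: (ltngtP t K) => [htK'|htK'|etK]; last first.
- (* t = K *)
  have hzt' : nth 0 z t != M by move: hzt; rewrite /L etK ltnn.
  set a := nth 0 z t in hzt' *.
  have haM : a < M.
    rewrite ltn_neqAle hzt' /=.
    by apply: hmax; rewrite mem_nth.
  have hKu : t < u.
    case: (ltngtP t u) => // h.
    + have [_ e] := hpre u h.
      by have := Kof_lt hm (leq_trans h htK); rewrite -/K -e hzu ltnn.
    + by move: haM; rewrite /a h hzu ltnn.
  have hau : a < nth 0 z u by rewrite hzu.
  have [r [hur hrn har htail]] := last_gt hu hau.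
  exists t, r; split => //.
  + by rewrite ht0 (leq_trans hKu hur).
  + rewrite hfz1; apply: leq_trans (hmax _ (mem_nth 0 hrn)) _.
    by rewrite etK; exact: Kof_ge.
  + move=> hr1; apply: leq_trans (htail r.+1 (ltnSn r) hr1) _.
    exact: ltnW (fm_gt a hm).
- by move: htK; rewrite leqNgt htK'.
- (* t < K : main case *)
  have hzt' : nth 0 z t != t * m by move: hzt; rewrite /L htK'.
  set a := nth 0 z t in hzt' hat *.
  have hatm : a < t * m by rewrite ltn_neqAle hzt' hat.
  have htmM : t * m < M by exact: Kof_lt hm htK'.
  have ha_in : a \in z by exact: mem_nth.
  have hic : icond m z a.
    have hc1 : 0 < count_mem a z by rewrite -has_count has_pred1.
    case: (boolP (m %| a)) => hd.
    + have ea : a = a %/ m * m by rewrite divnK.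
      have hq : a %/ m < t by rewrite ltn_divLR.
      have [_ eq] := hpre _ hq.
      by rewrite /icond (count_two (i := a %/ m) (j := t)) // eq -ea.
    + rewrite /icond hd andbT; case: (ltngtP 1 (count_mem a z)) => //; lia.
  have htu : t < u.
    case: (ltngtP t u) => // h.
    + have [_ e] := hpre u h.
      by have := Kof_lt hm (leq_trans h htK); rewrite -/K -e hzu ltnn.
    + by move: hatm htmM; rewrite /a h hzu; lia.
  have hau : a < nth 0 z u by rewrite hzu; exact: ltn_trans hatm htmM.
  have [rho [hurho hrhon harho htail]] := last_gt hu hau.
  set w := nth 0 z rho in harho.
  have htrho : t < rho by apply: leq_trans htu hurho.
  have hwM : w <= M by apply: hmax; exact: mem_nth.
  apply: NNPP => hno.
  have star : forall p, t <= p -> p < rho -> nth 0 z p < w -> fm m (nth 0 z p.-1) < w.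
    move=> p htp hprho hpw; rewrite ltnNge; apply/negP => hle.
    have [r [hrr hrn hpr htl]] := last_gt hrhon hpw.
    have hzr : nth 0 z r <= w.
      have [hlt|hgt|heq] := ltngtP rho r.
      + exact: leq_trans (htail r hlt hrn) (ltnW harho).
      + by move: hrr; rewrite leqNgt hgt.
      + by rewrite -heq.
    apply: hno; exists p, r; split => //.
    + by rewrite (leq_trans ht0 htp) (leq_trans hprho hrr).
    + exact: leq_trans hzr hle.
    + move=> hr1; apply: leq_trans (htl r.+1 (ltnSn r) hr1) _.
      exact: ltnW (fm_gt _ hm).
  have htw : t * m < w by rewrite -hfz1; apply: star => //; exact: leqnn.
  have exE : exists j, [&& t < j, j <= rho & w <= nth 0 z j] by exists rho; rewrite htrho leqnn /=; exact: leqnn.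
  case: (ex_minnP exE) => e /and3P [hte herho hwe] hemin.
  have hbelow : forall j, t < j -> j < e -> nth 0 z j < w.
    move=> j h1 h2; rewrite ltnNge; apply/negP => h3.
    have := hemin j; rewrite h1 h3 (leq_trans (ltnW h2) herho) => /(_ isT).
    by rewrite leqNgt h2.
  have hen : e < size z by apply: leq_ltn_trans herho hrhon.
  have hfa : fm m a <= t * m.
    by rewrite /fm leq_mul2r; apply/orP; right; rewrite ltn_divLR.
  have he2 : t.+1 < e.
    rewrite ltn_neqAle hte andbT; apply/negP => /eqP ee.
    have := hstep t; rewrite ee => /(_ hen) hz.
    have : nth 0 z e < w by apply: leq_ltn_trans hz (leq_ltn_trans hfa htw).
    by rewrite ltnNge hwe.
  have [e' ee] : exists e', e = e'.+2 by exists e.-2; lia.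
  subst e.
  set c := nth 0 z e'.+1.
  have hc : c < w by apply: hbelow => //; apply: leq_trans he2 _.
  set lam := c %/ m.
  have hwf : w <= lam.+1 * m.
    apply: leq_trans hwe _; exact: hstep e'.+1 hen.
  have hlow : forall j, t <= j -> j.+1 < e'.+2 -> nth 0 z j < lam * m.
    move=> j htj hje.
    have h1 : nth 0 z j.+1 < w by apply: hbelow.
    have h2 : j.+1 < rho by exact: leq_trans hje herho.
    have := star j.+1 (leq_trans htj (leqnSn j)) h2 h1 => /= h3.
    have h4 : fm m (nth 0 z j) < lam.+1 * m by apply: leq_trans h3 hwf.
    by rewrite /fm ltn_mul2r hm /= ltnS ltn_divLR // in h4.
  have hcl : c = lam * m.
    apply/eqP; rewrite eqn_leq; apply/andP; split; last exact: leq_divM.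
    have h1 : e'.+1 < rho by apply: leq_trans herho.
    have := star e'.+1 (ltnW he2) h1 hc => /= h3.
    have h4 : fm m (nth 0 z e') < lam.+1 * m by apply: leq_trans h3 hwf.
    have h5 : c <= fm m (nth 0 z e') by apply: hstep; apply: ltn_trans hen.
    apply: leq_trans h5 _; move: h4; rewrite /fm ltn_mul2r hm /= ltnS => h6.
    by rewrite leq_mul2r h6 orbT.
  have hlt : t <= lam.
    have h : t * m < lam.+1 * m by apply: leq_trans htw hwf.
    by move: h; rewrite ltn_mul2r hm ltnS.
  have hlM : lam * m < M.
    rewrite -hcl; apply: (@leq_trans w); [exact: hc | exact: hwM].
  have htl : t * m <= lam * m by rewrite leq_mul2r hlt orbT.
  have hal : a < lam * m by exact: (leq_trans hatm htl).
  have hcnt := hH a (lam * m) hic hal hlM (dvdn_mull lam (dvdnn m)).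
  have hnd : forall j, e'.+2 <= j -> j <= rho -> w <= nth 0 z j.
    apply: NNPP => hne.
    have exD : exists j, [&& e'.+2 <= j, j <= rho & nth 0 z j < w].
      apply: NNPP => hne2; apply: hne => j h1 h2; rewrite leqNgt; apply/negP => h3.
      by apply: hne2; exists j; rewrite h1 h2 h3.
    case: (ex_minnP exD) => j /and3P [h1 h2 h3] hjmin.
    have hje : e'.+2 < j.
      rewrite ltn_neqAle h1 andbT; apply/negP => /eqP ej.
      by move: h3; rewrite -ej ltnNge hwe.
    have hjr : j < rho.
      rewrite ltn_neqAle h2 andbT; apply/negP => /eqP ej.
      by move: h3; rewrite ej ltnn.
    have hprev : w <= nth 0 z j.-1.
      rewrite leqNgt; apply/negP => h4.
      have := hjmin j.-1; rewrite h4 -ltnS prednK ?hje ?(leq_trans (leq_pred j) h2) //=.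
      + by move=> /(_ isT); rewrite leqNgt ltn_predL (ltn_trans _ hje).
      + exact: ltn_trans _ hje.
    have := star j (ltnW (ltn_trans hte hje)) hjr h3.
    move=> h5; have h6 := fm_gt (nth 0 z j.-1) hm.
    have : w < w by apply: leq_ltn_trans hprev (ltn_trans h6 h5).
    by rewrite ltnn.
  have : count_mem (lam * m) z <= 1.
    apply: (@count_le1 _ _ e'.+1) => j hj hne.
    case: (ltnP j t) => hjt.
      have [_ ->] := hpre j hjt; rewrite neq_ltn; apply/orP; left.
      have h1 : j * m < t * m by rewrite ltn_mul2r hm hjt.
      exact: leq_trans h1 htl.
    case: (ltnP j.+1 e'.+2) => hje.
      by rewrite neq_ltn hlow.
    case: (leqP j rho) => hjr.
      have hj2 : e'.+2 <= j by move: hje hne; rewrite ltnS leq_eqVlt eq_sym => /orP [->|].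
      rewrite neq_ltn; apply/orP; right; rewrite -hcl; apply: leq_trans hc _; exact: hnd.
    rewrite neq_ltn; apply/orP; left; apply: leq_ltn_trans (htail j hjr hj) hal.
  by rewrite leqNgt hcnt.
Qed.

Lemma K_eq m M : 0 < m -> absz ((floorm m (Posz M - 1) %/ (Posz m))%Z + 1)%R = Kof m M.
Proof.
move=> hm.
have e : floorm m (Posz M - 1) = (((Posz M - 1) %/ (Posz m))%Z * Posz m)%R.
  by rewrite /floorm {1}(divz_eq (Posz M - 1) (Posz m)) addrK.
have hm0 : Posz m != 0 by rewrite eqz_nat -lt0n.
rewrite e mulzK //; clear e.
case: M => [|M] /=.
- have -> : (Posz 0 - 1 = Negz 0)%R by [].
  by rewrite divNz_nat // div0n addNr.
- have -> : (Posz M.+1 - 1 = Posz M)%R by rewrite -addn1 PoszD addrK.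
  by rewrite divz_nat -PoszD addn1.
Qed.

Lemma count_Posz (z : seq nat) n : count_mem (Posz n) (map Posz z) = count_mem n z.
Proof. by rewrite count_map; apply: eq_count => x /=; rewrite eqz_nat. Qed.

Lemma count_Negz (z : seq nat) n : count_mem (Negz n) (map Posz z) = 0.
Proof. by rewrite count_map; apply/eqP; rewrite -leqn0 leqNgt -has_count; apply/hasP => [[x _]]. Qed.

Lemma dvdz_natE (m n : nat) : (Posz m %| Posz n)%Z = (m %| n).
Proof. by []. Qed.

Lemma vertex m z0 w : 0 < m -> validz m z0 -> validz m w -> perm_eq z0 w ->
  G_vertex m (bfrom m 0 z0) (bfrom m 0 w).
Proof.
move=> hm hv0 hvw hp; have [hs hg] := validz_goodb hm hvw; split => //.
- by apply/singleton_iff.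
- exact: rook_perm.
Qed.

Lemma edge m z1 p r : 0 < m -> validz m z1 -> mv m z1 p r ->
  G_edge (bfrom m 0 z1) (bfrom m 0 (swapz z1 p r)).
Proof.
move=> hm hv1 hmv; have hv2 := mv_valid hm hv1 hmv.
have hb1 := validz_bound hm hv1; have hb2 := validz_bound hm hv2.
case: hmv => [/andP [hp0 hpr] hrn hlt _ _].
have hpn : p < size z1 by apply: ltn_trans hrn.
rewrite /G_edge /pad !size_bfrom size_swapz maxnn subnn /=.
exists p, r, (nth 0 z1 r - nth 0 z1 p); split; first split => //.
- by rewrite neq_ltn hpr.
- by rewrite subn_gt0.
have e2p : nth 0 (swapz z1 p r) p = nth 0 z1 r by rewrite nth_swapz // /tau eqxx.
have e2r : nth 0 (swapz z1 p r) r = nth 0 z1 p.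
  by rewrite nth_swapz // /tau (gtn_eqF hpr) eqxx.
have hrp : nth 0 z1 r <= m * p by rewrite -e2p; apply: hb2; rewrite size_swapz.
have hrr : nth 0 z1 r <= m * r by apply: hb1.
split; [|split].
- rewrite !nth_bfrom ?size_swapz // !add0n e2p; lia.
- rewrite !nth_bfrom ?size_swapz // !add0n e2r; lia.
- move=> l hl hlp hlr; rewrite !nth_bfrom ?size_swapz // nth_swapz //.
  by rewrite /tau (negbTE hlp) (negbTE hlr).
Qed.

Lemma conn m z0 x y : 0 < m -> validz m z0 -> clos_refl_trans _ (zstep m) x y ->
  perm_eq z0 x -> validz m x ->
  [/\ perm_eq z0 y, validz m y & G_connected m (bfrom m 0 z0) (bfrom m 0 x) (bfrom m 0 y)].
Proof.
move=> hm hv0 hxy; elim: hxy => {x y} [x y hs|x|x y w _ IH1 _ IH2] hp hvx.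
- case: hs => _ [p [r [hmv ->]]].
  have hvy := mv_valid hm hvx hmv.
  have hpy : perm_eq z0 (swapz x p r).
    apply: perm_trans hp _; apply: perm_swapz; case: hmv => [/andP [_ h1] h2 _ _ _] //.
    exact: ltn_trans h1 h2.
  split => //; apply: rt_step; split.
  + exact: vertex.
  + exact: vertex.
  + exact: edge.
- by split => //; apply: rt_refl.
- have [h1 h2 h3] := IH1 hp hvx.
  have [h4 h5 h6] := IH2 h1 h2.
  split => //; exact: rt_trans h3 h6.
Qed.


End Helpers.
Import Helpers.
Unset Implicit Arguments. Set Strict Implicit. Set Printing Implicit Defensive.

Local Open Scope ring_scope.

Theorem lemma20 (m : nat) (B : seq nat) (M : int) :
  (0 < m)%N ->
  is_board B -> singleton m B -> (0 < size B)%N ->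
  (forall z, z \in root_vec m B -> 0 <= z) ->
  root_count m B M != 0%N ->
  (forall k : int, root_count m B k != 0%N -> k <= M) ->
  (forall i : int, least_i m B i ->
     forall s : int, 0 <= s -> (m%:Z %| s)%Z -> s < M -> i < s ->
       (2 <= root_count m B s)%N) ->
  exists B' : seq nat,
    [/\ size B' = size B, G_connected m B B B' &
      let K := absz ((floorm m (M - 1) %/ m%:Z)%Z + 1) in
      [/\ (K < size B')%N,
          forall j : nat, (j < K)%N -> nth 0 (root_vec m B') j = (j * m)%N%:Z &
          nth 0 (root_vec m B') K = M]].
Proof.
move=> hm hB hS hn hnn hMc hMmax hH.
have hle : forall j, (j < size B)%N -> (nth 0 B j <= m * j)%N.
  move=> j hj.
  have hin : ((m * j)%N%:Z - (nth 0%N B j)%:Z) \in root_vec m B.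
    by apply/mapP; exists j; rewrite ?mem_iota.
  by have := hnn _ hin; rewrite subr_ge0 lez_nat.
have hg : goodb m B by split => //; apply/singleton_iff.
have [hv hbz] := board_to_z hm hg hle.
set z := zof m B in hv hbz.
have hrv : root_vec m B = map Posz z by rewrite -{1}hbz root_vec_bfrom.
have hcnt : forall k : int, root_count m B k = (if k is Posz n then count_mem n z else 0%N).
  by move=> [n|n]; rewrite /root_count hrv ?count_Posz ?count_Negz.
case: M hMc hMmax hH => [Mn|Mn]; last by rewrite hcnt.
move=> hMc hMmax hH.
have hMz : Mn \in z by move: hMc; rewrite hcnt -has_pred1 has_count lt0n.
have hmax : forall x, x \in z -> (x <= Mn)%N.
  move=> x hx; have := hMmax (Posz x); rewrite hcnt -lt0n -has_count has_pred1 hx.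
  by rewrite lez_nat; apply.
have hH' : forall (w : seq nat), perm_eq z w -> forall a s, icond m w a -> (a < s)%N -> (s < Mn)%N ->
    (m %| s)%N -> (1 < count_mem s w)%N.
  move=> w hpw a s ha has hsM hd.
  have ecnt : forall x, count_mem x w = count_mem x z.
    by move=> x; move/permP: hpw => ->.
  have exI : exists i, icond m z i by exists a; rewrite /icond -!ecnt.
  case: (ex_minnP exI) => i0 hi0 hmin.
  have hi0a : (i0 <= a)%N by apply: hmin; rewrite /icond -!ecnt.
  have hl : least_i m B (Posz i0).
    split => //.
    - by rewrite /i_cond !hcnt dvdz_natE.
    - move=> [j|j] hj0 hj //; rewrite ltz_nat in hj.
      rewrite /i_cond !hcnt dvdz_natE; apply/negP => hc.
      by have := hmin j hc; rewrite leqNgt hj.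
  have := hH (Posz i0) hl (Posz s) (le0z_nat s) _ _ _.
  rewrite hcnt ecnt; apply => //; try by rewrite ltz_nat.
  by rewrite ltz_nat (leq_ltn_trans hi0a has).
have hex : forall w, validz m w -> perm_eq z w -> ~ tgt m Mn w -> exists p r, mv m w p r.
  move=> w hvw' hpw' hnt; apply: (exists_move hm hvw' _ _ (hH' w hpw') hnt).
  - by rewrite -(perm_mem hpw').
  - by move=> x hx; apply: hmax; rewrite (perm_mem hpw').
have hQ : forall w p r, perm_eq z w -> mv m w p r -> perm_eq z (swapz w p r).
  move=> w p r hq hmv; apply: perm_trans hq (perm_swapz _ _);
  case: hmv => [/andP [_ h1] h2 _ _ _] //; exact: ltn_trans h1 h2.
have [w [hr ht hvw hpw]] := reach hm hex hQ hv (perm_refl z).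
have [_ _ hc] := conn hm hv hr (perm_refl z) hv.
rewrite hbz in hc.
exists (bfrom m 0 w); split => //.
- by rewrite size_bfrom -(perm_size hpw) -hbz size_bfrom.
- rewrite K_eq // root_vec_bfrom //.
  case: ht => hK hpre hKM; split.
  + by rewrite size_bfrom.
  + by move=> j hj; rewrite (nth_map 0%N) ?hpre //; apply: ltn_trans hj hK.
  + by rewrite (nth_map 0%N) // hKM.
Qed.
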